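(* Let $\Omega\subset\mathbb{R}^n$ be a bounded open set, $A\subset\Omega$ a non-empty open set, and $\lambda>0$. Let $f(x)=\mathrm{dist}^2(x,A^c)$ and let $f^{-}_{\overline\Omega}:\overline\Omega\to\mathbb{R}$ equal $f$ on $\Omega$ and $\inf_\Omega f$ on $\partial\Omega$. Then for every $x\in\overline\Omega$, $$\mathcal{M}(\lambda;A^c)(x)=(1+\lambda)\Big(f^{-}_{\overline\Omega}(x)-C^l_{\lambda,\Omega}(f^{-}_{\overline\Omega})(x)\Big).$$
   Context: $A^c=\mathbb{R}^n\setminus A$; $\mathrm{dist}(x,B)=\inf_{y\in B}|x-y|$. For a nonempty closed set $F$, $\mathcal{M}(\lambda;F)(x)=(1+\lambda)\big(\mathrm{dist}^2(x;F)-C^l_\lambda(\mathrm{dist}^2(\cdot;F))(x)\big)$ for $x\in\mathbb{R}^n$, where $C^l_\lambda(g)(x)=\mathrm{co}[g+\lambda|\cdot|^2](x)-\lambda|x|^2$ and $\mathrm{co}$ is the convex envelope. For bounded $g:\overline\Omega\to\mathbb{R}$ and $x\in\overline\Omega$: $M_{\lambda,\Omega}(g)(x)=\inf_{y\in\overline\Omega}\{g(y)+\lambda|y-x|^2\}$, $M^{\lambda}_{\Omega}(g)(x)=\sup_{y\in\overline\Omega}\{g(y)-\lambda|y-x|^2\}$, and $C^l_{\lambda,\Omega}(g)(x)=M^{\lambda}_{\Omega}(M_{\lambda,\Omega}(g))(x)$. *)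

(* Defs.v *)
From mathcomp Require Import all_boot all_order all_algebra.
From mathcomp Require Import all_classical all_reals all_analysis.
Set Implicit Arguments. Unset Strict Implicit. Unset Printing Implicit Defensive.
Import Order.TTheory GRing.Theory Num.Theory.
Import numFieldTopology.Exports numFieldNormedType.Exports.
Local Open Scope classical_set_scope.
Local Open Scope ring_scope.

Section Defs.
Variables (R : realType) (n : nat).
Notation V := 'rV[R]_n.

Definition sqnorm (x : V) : R := \sum_(i < n) (x ord0 i) ^+ 2.

Definition dist (x : V) (B : set V) : R :=
  inf [set Num.sqrt (sqnorm (x - y)) | y in B].

Definition convex_fun (h : V -> R) : Prop :=
  forall (x y : V) (t : R), 0 <= t <= 1 ->
    h (t *: x + (1 - t) *: y) <= t * h x + (1 - t) * h y.

Definition co (g : V -> R) (x : V) : R :=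
  sup [set h x | h in [set h : V -> R | convex_fun h /\ forall z, h z <= g z]].

Definition Cl (lam : R) (g : V -> R) (x : V) : R :=
  co (fun y => g y + lam * sqnorm y) x - lam * sqnorm x.

Definition Mtrans (lam : R) (F : set V) (x : V) : R :=
  (1 + lam) * ((dist x F) ^+ 2 - Cl lam (fun y => (dist y F) ^+ 2) x).

Definition Minf (lam : R) (Om : set V) (g : V -> R) (x : V) : R :=
  inf [set g y + lam * sqnorm (y - x) | y in closure Om].

Definition Msup (lam : R) (Om : set V) (g : V -> R) (x : V) : R :=
  sup [set g y - lam * sqnorm (y - x) | y in closure Om].

Definition ClOm (lam : R) (Om : set V) (g : V -> R) (x : V) : R :=
  Msup lam Om (Minf lam Om g) x.

(* f^-_{cl Omega}: equals f on Omega and inf_Omega f on the boundary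
   (values outside cl Omega are irrelevant; we use inf_Omega f there too) *)
Definition fminus (Om : set V) (f : V -> R) (x : V) : R :=
  if `[< Om x >] then f x else inf (f @` Om).

End Defs.

(* Main.v *)
Require Import Defs.
From mathcomp Require Import all_boot all_order all_algebra.
From mathcomp Require Import all_classical all_reals all_analysis.
From mathcomp Require Import ring lra.
Import Order.TTheory GRing.Theory Num.Theory.
Import numFieldTopology.Exports numFieldNormedType.Exports.
Local Open Scope classical_set_scope.
Local Open Scope ring_scope.

Section Alg.
Variables (R : realType) (n : nat).
Notation V := 'rV[R]_n.
Definition dot (u v : V) : R := \sum_(i < n) u ord0 i * v ord0 i.

Lemma dotC (u v : V) : dot u v = dot v u.
Proof. by apply: eq_bigr => i _; rewrite mulrC. Qed.
Lemma dotDr (u v w : V) : dot u (v + w) = dot u v + dot u w.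
Proof. by rewrite /dot -big_split; apply: eq_bigr => i _; rewrite mxE mulrDr. Qed.
Lemma dotBr (u v w : V) : dot u (v - w) = dot u v - dot u w.
Proof. by rewrite /dot -sumrB; apply: eq_bigr => i _; rewrite !mxE mulrBr. Qed.
Lemma dotZr (u : V) (a : R) (v : V) : dot u (a *: v) = a * dot u v.
Proof. by rewrite /dot mulr_sumr; apply: eq_bigr => i _; rewrite mxE mulrCA. Qed.
Lemma dotDl (u v w : V) : dot (v + w) u = dot v u + dot w u.
Proof. by rewrite dotC dotDr !(dotC u). Qed.
Lemma dotBl (u v w : V) : dot (v - w) u = dot v u - dot w u.
Proof. by rewrite dotC dotBr !(dotC u). Qed.
Lemma dotZl (u : V) (a : R) (v : V) : dot (a *: v) u = a * dot v u.
Proof. by rewrite dotC dotZr dotC. Qed.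
Lemma dot0r (u : V) : dot u 0 = 0.
Proof. by rewrite /dot big1 // => i _; rewrite mxE mulr0. Qed.
Lemma sqnormE (u : V) : sqnorm u = dot u u.
Proof. by apply: eq_bigr => i _; rewrite expr2. Qed.
Lemma sqnorm_ge0 (u : V) : 0 <= sqnorm u.
Proof. by apply: sumr_ge0 => i _; rewrite sqr_ge0. Qed.
Lemma sqnormB (u v : V) : sqnorm (u - v) = sqnorm u - 2 * dot u v + sqnorm v.
Proof. rewrite !sqnormE dotBl !dotBr (dotC v u). ring. Qed.
Lemma sqnormZ (a : R) (u : V) : sqnorm (a *: u) = a ^+ 2 * sqnorm u.
Proof. rewrite !sqnormE dotZl dotZr. ring. Qed.
Lemma sqnormBC (u v : V) : sqnorm (u - v) = sqnorm (v - u).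
Proof. rewrite !sqnormB (dotC v u); ring. Qed.

Lemma divle (A B r s : R) : 0 < r -> 0 < s -> A * s <= B * r -> A / r <= B / s.
Proof.
move=> r0 s0 H; rewrite ler_pdivrMr // mulrAC ler_pdivlMr //.
Qed.

Lemma subgrad (h : V -> R) (x : V) : convex_fun h ->
  exists a : V, forall z, h x + dot a (z - x) <= h z.
Proof.
move=> hc.
suff H : forall k, (k <= n)%N -> exists a : V, forall u : V,
    (forall i : 'I_n, (k <= i)%N -> u ord0 i = 0) -> h x + dot a u <= h (x + u).
  have [a Ha] := H n (leqnn n); exists a => z.
  have Wz : forall i : 'I_n, (n <= i)%N -> (z - x) ord0 i = 0.
    by move=> i; rewrite leqNgt ltn_ord.
  by have := Ha _ Wz; rewrite [x + _]addrC subrK.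
elim=> [_|k IH hk].
  exists 0 => u Hu.
  have -> : u = 0 by apply/rowP => i; rewrite mxE; apply: Hu.
  by rewrite dot0r !addr0.
have [a Ha] := IH (ltnW hk).
pose i0 : 'I_n := Ordinal hk.
pose e : V := \row_j ((j == i0)%:R : R).
pose W (u : V) := forall i : 'I_n, (k <= i)%N -> u ord0 i = 0.
have dot_e : forall w : V, dot e w = w ord0 i0.
  move=> w; rewrite /dot (bigD1 i0) //= big1 => [|j /negbTE nj].
    by rewrite mxE eqxx mul1r addr0.
  by rewrite mxE nj mul0r.
have key : forall u u' r s, W u -> W u' -> 0 < r -> 0 < s ->
    (h x + dot a u - h (x + u - r *: e)) / r <=
    (h (x + u' + s *: e) - h x - dot a u') / s.
  move=> u u' r s Wu Wu' r0 s0.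
  have rs0 : 0 < r + s by rewrite addr_gt0.
  have rsn0 : r + s != 0 by rewrite gt_eqF.
  pose t := s / (r + s).
  have t01 : 0 <= t <= 1.
    apply/andP; split; first by rewrite divr_ge0 // ltW.
    by rewrite ler_pdivrMr // mul1r lerDr ltW.
  have Wm : W (t *: u + (1 - t) *: u').
    by move=> i hi; rewrite !mxE Wu // Wu' // !mulr0 addr0.
  have conv := hc (x + u - r *: e) (x + u' + s *: e) t t01.
  have eqpt : t *: (x + u - r *: e) + (1 - t) *: (x + u' + s *: e) =
              x + (t *: u + (1 - t) *: u').
    apply/rowP => j; rewrite !mxE /t; field; exact: rsn0.
  rewrite eqpt in conv.
  have IHm := Ha _ Wm; rewrite dotDr !dotZr in IHm.
  have H3 := le_trans IHm conv.
  have H4 : (r + s) * (h x + (t * dot a u + (1 - t) * dot a u')) <=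
            (r + s) * (t * h (x + u - r *: e) + (1 - t) * h (x + u' + s *: e)).
    by rewrite ler_pM2l.
  have E1 : forall A B, (r + s) * (t * A + (1 - t) * B) = s * A + r * B.
    by move=> A B; rewrite /t; field.
  rewrite mulrDr !E1 in H4.
  apply: divle => //.
  nra.
pose L := [set v | exists u r, W u /\ 0 < r /\
                   v = (h x + dot a u - h (x + u - r *: e)) / r].
have W0 : W 0 by move=> i _; rewrite mxE.
have Lne : L !=set0.
  by exists ((h x + dot a 0 - h (x + 0 - 1 *: e)) / 1); exists 0, 1.
have Lub : ubound L ((h (x + 0 + 1 *: e) - h x - dot a 0) / 1).
  by move=> v [u [r [Wu [r0 ->]]]]; apply: key.
have hasL : has_sup L by split => //; eexists; exact: Lub.
pose c := sup L.
have cle : forall u' s, W u' -> 0 < s ->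
    c <= (h (x + u' + s *: e) - h x - dot a u') / s.
  move=> u' s Wu' s0; apply: ge_sup => //.
  by move=> v [u [r [Wu [r0 ->]]]]; apply: key.
have cge : forall u r, W u -> 0 < r ->
    (h x + dot a u - h (x + u - r *: e)) / r <= c.
  by move=> u r Wu r0; apply: sup_upper_bound => //; exists u, r.
exists (a + (c - dot a e) *: e) => v Wv.
pose s := v ord0 i0.
pose u := v - s *: e.
have Wu : W u.
  move=> i hi; rewrite /u /e /s !mxE.
  have [ei|nei] := eqVneq i i0.
    by rewrite ei /= mulr1 subrr.
  rewrite /= mulr0 subr0; apply: Wv.
  rewrite ltn_neqAle hi andbT; apply: (contra_neq _ nei) => ki.
  by apply: val_inj; rewrite /= -ki.
have ve : v = u + s *: e by rewrite subrK.
have dot_ae : dot (a + (c - dot a e) *: e) v = dot a u + s * c.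
  have deu : dot e u = 0 by rewrite dot_e; apply: Wu; rewrite /= leqnn.
  have dee : dot e e = 1 by rewrite dot_e /e mxE eqxx.
  rewrite {1}ve dotDr dotZr !dotDl !dotZl deu dee; ring.
clearbody u; rewrite dot_ae ve !addrA.
have [s0|s0|s0] := ltgtP s 0.
- have := cge u (- s) Wu; rewrite oppr_gt0 => /(_ s0).
  rewrite scaleNr opprK ler_pdivrMr ?oppr_gt0 //.
  move=> HH; nra.
- have := cle u s Wu s0; rewrite ler_pdivlMr //.
  move=> HH; nra.
- rewrite s0 scale0r !addr0 mul0r addr0; exact: Ha.
Qed.

Lemma bdry (Om : set V) (y z : V) : open Om -> closure Om y -> ~ closure Om z ->
  exists t : R, 0 <= t <= 1 /\ closure Om (y + t *: (z - y)) /\ ~ Om (y + t *: (z - y)).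
Proof.
move=> oOm cy ncz.
have [Oy|nOy] := pselect (Om y); last first.
  by exists 0; rewrite scale0r addr0 lexx ler01.
pose p t := y + t *: (z - y).
have p0 : p 0 = y by rewrite /p scale0r addr0.
pose Tt := [set t | 0 <= t <= 1 /\ Om (p t)].
have T0 : Tt 0 by split; [rewrite lexx ler01|rewrite p0].
have hasTt : has_sup Tt.
  by split; [exists 0|exists 1 => t [/andP[_ ->]]].
pose ts := sup Tt.
have ts0 : 0 <= ts by apply: sup_upper_bound.
have ts1 : ts <= 1 by apply: ge_sup; [exists 0|move=> t [/andP[_ ->]]].
have pdiff : forall t1 t2, `|p t1 - p t2| = `|t1 - t2| * `|z - y|.
  move=> t1 t2; rewrite -normrZ; congr (`| _ |).
  by apply/rowP => j; rewrite !mxE; ring.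
pose K := `|z - y| + 1.
have K0 : 0 < K by rewrite /K ltr_pwDr.
have zyK : `|z - y| <= K by rewrite /K lerDl.
exists ts; split; first by rewrite ts0 ts1.
split.
  move=> B /nbhs_ballP [e e0 sB].
  have eK0 : 0 < e / K by rewrite divr_gt0.
  have [t Ttt tlt] := sup_adherent eK0 hasTt.
  have tts : t <= ts by apply: sup_upper_bound.
  case: Ttt => /andP[t0 t1] Opt.
  exists (p t); split => //; apply: sB; rewrite -ball_normE /= pdiff.
  rewrite ger0_norm ?subr_ge0 //.
  apply: (le_lt_trans (ler_wpM2l _ zyK)); first by rewrite subr_ge0.
  by rewrite -ltr_pdivlMr // ltrBlDr addrC -ltrBlDr.
move=> Ots.
have /nbhs_ballP [e e0 sB] := @open_nbhs_nbhs _ _ _ (conj oOm Ots).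
have [ts_eq1|ts_lt1] := eqVneq ts 1.
  apply: ncz; apply: subset_closure.
  have <- : p ts = z by rewrite ts_eq1 /p scale1r addrC subrK.
  exact: Ots.
have ts_lt : ts < 1 by rewrite lt_neqAle ts_lt1 ts1.
pose d := Num.min (1 - ts) (e / (2 * K)).
have eK2 : 0 < e / (2 * K) by rewrite divr_gt0 // mulr_gt0.
have d0 : 0 < d by rewrite lt_min subr_gt0 ts_lt eK2.
have d1 : d <= 1 - ts by rewrite ge_min lexx.
have d2 : d <= e / (2 * K) by rewrite ge_min lexx orbT.
have : Tt (ts + d).
  split; first by apply/andP; split; lra.
  apply: sB; rewrite -ball_normE /= pdiff.
  have -> : ts - (ts + d) = - d by ring.
  rewrite normrN gtr0_norm //.
  apply: (le_lt_trans (ler_wpM2l (ltW d0) zyK)).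
  apply: (le_lt_trans (ler_wpM2r (ltW K0) d2)).
  have -> : e / (2 * K) * K = e / 2 by field; rewrite gt_eqF.
  by rewrite ltr_pdivrMr // ltr_pMr // ltr1n.
move=> Td; have HH : ts + d <= ts by exact: (sup_upper_bound hasTt Td).
by move: HH; rewrite gerDl leNgt d0.
Qed.

Lemma main_eq (Om : set V) (lam : R) (g phi : V -> R) (x : V) :
  open Om -> 0 < lam -> (forall z, 0 <= g z) ->
  (forall z, closure Om z -> phi z = g z) ->
  (forall z, closure Om z -> ~ Om z -> g z = 0) ->
  closure Om x ->
  Cl lam g x = ClOm lam Om phi x.
Proof.
move=> oOm lam0 g0 Hphi Hbd cx.
have lamn0 : lam != 0 by rewrite gt_eqF.
pose L y := Minf lam Om phi y.
have Lnn : forall y, 0 <= L y.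
  move=> y; apply: lb_le_inf; first by exists (phi x + lam * sqnorm (x - y)), x.
  move=> v [z cz <-]; rewrite Hphi //.
  by apply: addr_ge0 => //; apply: mulr_ge0; [exact: ltW|exact: sqnorm_ge0].
have hasLinf : forall y, has_lbound [set phi z + lam * sqnorm (z - y) | z in closure Om].
  move=> y; exists 0 => v [z cz <-]; rewrite Hphi //.
  by apply: addr_ge0 => //; apply: mulr_ge0; [exact: ltW|exact: sqnorm_ge0].
have Lle : forall y z, closure Om z -> L y <= phi z + lam * sqnorm (z - y).
  by move=> y z cz; apply: ge_inf => //; exists z.
have Lge : forall y c, (forall z, closure Om z -> c <= phi z + lam * sqnorm (z - y)) -> c <= L y.
  move=> y c Hc; apply: lb_le_inf; first by exists (phi x + lam * sqnorm (x - y)), x.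
  by move=> v [z cz <-]; apply: Hc.
pose T := [set L y - lam * sqnorm (y - x) | y in closure Om].
have hasT : has_sup T.
  split; first by exists (L x - lam * sqnorm (x - x)), x.
  exists (phi x) => v [y cy <-].
  have := Lle y x cx; rewrite (sqnormBC x y) => HH; lra.
have Tle : forall y, closure Om y -> L y - lam * sqnorm (y - x) <= sup T.
  by move=> y cy; apply: sup_upper_bound => //; exists y.
pose G := fun y => g y + lam * sqnorm y.
pose S := [set h x | h in [set h : V -> R | convex_fun h /\ forall z, h z <= G z]].
have S0 : S !=set0.
  exists 0, (fun _ => 0) => //; split.
    by move=> ? ? t _; rewrite !mulr0 addr0.
  by move=> z; rewrite /G; apply: addr_ge0 => //; apply: mulr_ge0; [exact: ltW|exact: sqnorm_ge0].
have hasS : has_sup S.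
  by split => //; exists (G x) => v [h [_ hG] <-].
rewrite /Cl /co -/G -/S /ClOm /Msup -/L -/T.
apply/eqP; rewrite eq_le; apply/andP; split.
-
  rewrite lerBlDr; apply: ge_sup => // v [h [hc hG] <-].
  have [a Ha] := @subgrad h x hc.
  pose y := (2 * lam)^-1 *: a.
  pose c := h x - dot a x + lam * sqnorm y.
  have idz : forall z, c - lam * sqnorm (z - y) = h x + dot a (z - x) - lam * sqnorm z.
    move=> z; rewrite /c sqnormB /y dotZr dotBr (dotC z a); field; exact: lamn0.
  have key : forall z, c - lam * sqnorm (z - y) <= g z.
    move=> z; rewrite idz; have := Ha z; have := hG z; rewrite /G => H1 H2; lra.
  have hxE : h x = c - lam * sqnorm (x - y) + lam * sqnorm x.
    by rewrite idz subrr dot0r addr0 subrK.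
  rewrite hxE lerD2r.
  have [cy|ncy] := pselect (closure Om y).
    have cL : c <= L y.
      by apply: Lge => z cz; rewrite Hphi //; have HH := key z; lra.
    have := Tle y cy; rewrite (sqnormBC y x) => HH; lra.
  have [t [t01 [cw nw]]] := bdry Om x y oOm cx ncy.
  pose w := x + t *: (y - x).
  have gw : g w = 0 by exact: Hbd.
  have := key w; rewrite gw => kw.
  have := Tle w cw; have := Lnn w => Lw Tw.
  have wx : w - x = t *: (y - x) by apply/rowP => j; rewrite !mxE; ring.
  have wy : w - y = (1 - t) *: (x - y) by apply/rowP => j; rewrite !mxE; ring.
  have seg : sqnorm (w - y) + sqnorm (w - x) <= sqnorm (x - y).
    rewrite wx wy !sqnormZ (sqnormBC y x).
    have := sqnorm_ge0 (x - y); case/andP: t01 => t0 t1 HS.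
    have h1 : 0 <= t * (1 - t) * sqnorm (x - y).
      by apply: mulr_ge0 => //; apply: mulr_ge0; lra.
    nra.
  have seg' : lam * sqnorm (w - y) + lam * sqnorm (w - x) <= lam * sqnorm (x - y).
    by rewrite -mulrDr ler_pM2l.
  lra.
-
  apply: ge_sup; first by exists (L x - lam * sqnorm (x - x)), x.
  move=> v [y cy <-].
  pose a := fun z => L y - lam * sqnorm (z - y) + lam * sqnorm z.
  have aE : forall z, a z = L y - lam * sqnorm y + 2 * lam * dot z y.
    by move=> z; rewrite /a sqnormB; ring.
  have ac : convex_fun a.
    move=> x1 y1 t _; rewrite !aE dotDl !dotZl.
    rewrite le_eqVlt; apply/orP; left; apply/eqP; ring.
  have aG : forall z, a z <= G z.
    move=> z; rewrite /a /G.
    suff : L y <= g z + lam * sqnorm (z - y) by lra.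
    have [cz|ncz] := pselect (closure Om z).
      by rewrite -Hphi //; exact: Lle.
    have [t [t01 [cw nw]]] := bdry Om y z oOm cy ncz.
    have := Lle y _ cw; rewrite Hphi // Hbd // add0r.
    have -> : y + t *: (z - y) - y = t *: (z - y).
      by apply/rowP => j; rewrite !mxE; ring.
    rewrite sqnormZ => HH.
    have := sqnorm_ge0 (z - y); have := g0 z; case/andP: t01 => t0 t1 H1 H2.
    have : t ^+ 2 * sqnorm (z - y) <= sqnorm (z - y).
      have t2 : 0 <= (1 - t ^+ 2) * sqnorm (z - y) by apply: mulr_ge0 => //; nra.
      nra.
    rewrite -(ler_pM2l lam0) => H3; lra.
  have : a x <= sup S by apply: sup_upper_bound => //; exists a.
  rewrite /a (sqnormBC x y) => HH; lra.
Qed.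

Lemma sqnorm0 : sqnorm (0 : V) = 0.
Proof. by rewrite sqnormE dot0r. Qed.

Lemma dist_ge0 (F : set V) (x : V) : F !=set0 -> 0 <= dist x F.
Proof.
move=> [w Fw]; apply: lb_le_inf; first by exists (Num.sqrt (sqnorm (x - w))), w.
by move=> v [y _ <-]; exact: sqrtr_ge0.
Qed.

Lemma dist2_le (F : set V) (x w : V) : F w -> dist x F ^+ 2 <= sqnorm (x - w).
Proof.
move=> Fw.
have d0 : 0 <= dist x F by apply: dist_ge0; exists w.
have dl : dist x F <= Num.sqrt (sqnorm (x - w)).
  apply: ge_inf; last by exists w.
  by exists 0 => v [y _ <-]; exact: sqrtr_ge0.
rewrite -(sqr_sqrtr (sqnorm_ge0 (x - w))) !expr2.
exact: ler_pM.
Qed.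

Lemma dist2_on (F : set V) (w : V) : F w -> dist w F ^+ 2 = 0.
Proof.
move=> Fw; apply/eqP; rewrite eq_le sqr_ge0 andbT.
by have := dist2_le F w w Fw; rewrite subrr sqnorm0.
Qed.

Lemma closure_small (Om : set V) (z : V) (eps : R) : 0 < eps -> closure Om z ->
  exists u, Om u /\ sqnorm (u - z) < eps.
Proof.
move=> e0 cz.
pose del := Num.min 1 (eps / (n%:R + 1)).
have n1 : 0 < n%:R + 1 :> R by rewrite ltr_pwDr.
have d0 : 0 < del by rewrite lt_min ltr01 divr_gt0.
have d1 : del <= 1 by rewrite ge_min lexx.
have d2 : del <= eps / (n%:R + 1) by rewrite ge_min lexx orbT.
have [u [Ou Bu]] := cz _ (nbhsx_ballx z del d0).
exists u; split => //.
move: Bu => [_ Hb].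
have : sqnorm (u - z) <= \sum_(i < n) del.
  apply: ler_sum => i _.
  have := Hb ord0 i; rewrite -ball_normE /= ltr_norml !mxE => /andP[H1 H2].
  nra.
rewrite sumr_const card_ord -mulr_natl => HH; apply: (le_lt_trans HH).
apply: (le_lt_trans (ler_wpM2l (ler0n _ _) d2)).
rewrite mulrA ltr_pdivrMr //; nra.
Qed.
End Alg.

Theorem corollary3p5 (R : realType) (n : nat) (Om A : set 'rV[R]_n) (lam : R) :
  open Om ->
  bounded_set Om ->
  open A -> A !=set0 -> A `<=` Om ->
  0 < lam ->
  let f := fun x => (dist x (~` A)) ^+ 2 in
  forall x, closure Om x ->
    Mtrans lam (~` A) x =
    (1 + lam) * (fminus Om f x - ClOm lam Om (fminus Om f) x).
Proof.
move=> oOm _ _ _ AOm lam0 f x cx.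
have g0 : forall z, 0 <= f z by move=> z; exact: sqr_ge0.
have Hbd : forall z, closure Om z -> ~ Om z -> f z = 0.
  move=> z _ nOz; apply: dist2_on => Az; apply: nOz; exact: AOm.
have Hphi : forall z, closure Om z -> fminus Om f z = f z.
  move=> z cz; rewrite /fminus.
  have [Oz|nOz] := pselect (Om z); first by rewrite asboolT.
  rewrite asboolF // Hbd //.
  have [u [Ou _]] := cz setT filterT.
  apply/eqP; rewrite eq_le; apply/andP; split; last first.
    apply: lb_le_inf; first by exists (f u), u.
    by move=> v [y _ <-].
  have hl : has_lbound (f @` Om) by exists 0 => v [y _ <-].
  apply/ler_addgt0Pr => e e0; rewrite add0r.
  have [w [Ow Hw]] := @closure_small _ _ _ _ _ e0 cz.
  apply: (le_trans (ge_inf hl (ex_intro2 _ _ w Ow erefl))).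
  apply: ltW; apply: le_lt_trans Hw.
  apply: (@dist2_le _ _ _ _ _) => Aw; apply: nOz; exact: AOm.
have E2 := @main_eq _ _ _ _ _ _ _ oOm lam0 g0 Hphi Hbd cx.
rewrite /Mtrans; congr (_ * (_ - _)).
  by rewrite (Hphi x cx).
exact: E2.
Qed.
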